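(* Let $n\ge0$. Every $f\in Mlt(Q_n)$ has order $1$, $2$ or $4$; in particular $f$ is a product of disjoint $2$-cycles and $4$-cycles.
   Context: Cayley--Dickson loops: $Q_0=\{1,-1\}\subset\mathbb{R}$ with conjugation $x^*=x$. For $n\ge1$, $Q_n=\{(x,0),(x,1)\mid x\in Q_{n-1}\}$ with multiplication $(x,0)(y,0)=(xy,0)$, $(x,0)(y,1)=(yx,1)$, $(x,1)(y,0)=(xy^*,1)$, $(x,1)(y,1)=(-y^*x,0)$ and conjugation $(x,0)^*=(x^*,0)$, $(x,1)^*=(-x,1)$, where $-(x,a)=(-x,a)$. $Q_n$ is a loop with neutral element $1=(1,0,\dots,0)$. For a loop $Q$, $L_x(a)=xa$, $R_x(a)=ax$, $Mlt(Q)=\langle L_x,R_x\mid x\in Q\rangle\le Sym(Q)$. *)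

(* Defs.v *)
From HB Require Import structures.
From mathcomp Require Import all_boot all_fingroup.
Set Implicit Arguments. Unset Strict Implicit. Unset Printing Implicit Defensive.

(* Carrier of the Cayley--Dickson loop Q_n.
   Q_0 = {1,-1} is encoded by bool (false = 1, true = -1);
   Q_{n+1} = Q_n * bool, the pair (x, a) with a = false meaning 0, true meaning 1. *)
Fixpoint CD (n : nat) : finType :=
  if n is n'.+1 then (CD n' * bool)%type else bool.

Fixpoint cd_neg (n : nat) : CD n -> CD n :=
  match n as m return CD m -> CD m with
  | 0 => negb
  | n'.+1 => fun p => (cd_neg p.1, p.2)
  end.

Fixpoint cd_conj (n : nat) : CD n -> CD n :=
  match n as m return CD m -> CD m with
  | 0 => id
  | n'.+1 => fun p => if p.2 then (cd_neg p.1, true) else (cd_conj p.1, false)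
  end.

(* Multiplication:
   (x,0)(y,0) = (xy,0), (x,0)(y,1) = (yx,1),
   (x,1)(y,0) = (xy^*,1), (x,1)(y,1) = (-(y^* x),0);
   on Q_0 it is multiplication of signs (xor). *)
Fixpoint cd_mul (n : nat) : CD n -> CD n -> CD n :=
  match n as m return CD m -> CD m -> CD m with
  | 0 => addb
  | n'.+1 => fun p q =>
      match p.2, q.2 with
      | false, false => (cd_mul p.1 q.1, false)
      | false, true => (cd_mul q.1 p.1, true)
      | true, false => (cd_mul p.1 (cd_conj q.1), true)
      | true, true => (cd_neg (cd_mul (cd_conj q.1) p.1), false)
      end
  end.

Fixpoint cd_one (n : nat) : CD n :=
  match n as m return CD m with
  | 0 => false
  | n'.+1 => (cd_one n', false)
  end.

(* The permutations of Q_n that coincide with some left translation L_x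
   or some right translation R_x.  Since Q_n is a loop, these are exactly
   the maps L_x, R_x (x in Q_n). *)
Definition translations (n : nat) : {set {perm CD n}} :=
  [set p : {perm CD n} | [exists x : CD n,
      [forall a : CD n, p a == cd_mul x a] || [forall a : CD n, p a == cd_mul a x]]].

Definition Mlt (n : nat) : {set {perm CD n}} := <<translations n>>%g.

(* Main.v *)
Require Import Defs.
From mathcomp Require Import all_boot all_fingroup.
From mathcomp Require Import cyclic.
Set Implicit Arguments. Unset Strict Implicit. Unset Printing Implicit Defensive.

Fixpoint cd_abs (n : nat) : CD n -> CD n :=
  match n as m return CD m -> CD m with
  | 0 => fun _ => false
  | n'.+1 => fun p => (cd_abs p.1, p.2)
  end.

Fixpoint cd_xr (n : nat) : CD n -> CD n -> CD n :=
  match n as m return CD m -> CD m -> CD m with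
  | 0 => fun _ _ => false
  | n'.+1 => fun p q => (cd_xr p.1 q.1, addb p.2 q.2)
  end.

Lemma neg_neg n (x : CD n) : cd_neg (cd_neg x) = x.
Proof. elim: n x => [|n IH] [] //=; by [case | move=> x b; rewrite IH]. Qed.

Lemma conj_neg n (x : CD n) : cd_conj (cd_neg x) = cd_neg (cd_conj x).
Proof. elim: n x => [|n IH] //= [x []] //=; by rewrite IH. Qed.

Lemma mul_neg n (x y : CD n) :
  cd_mul x (cd_neg y) = cd_neg (cd_mul x y) /\ cd_mul (cd_neg x) y = cd_neg (cd_mul x y).
Proof.
elim: n x y => [|n IH] /=.
  by move=> x y; split; [rewrite addbN | rewrite addNb].
move=> [x a] [y b] /=; case: a; case: b => /=;
  rewrite ?conj_neg ?(proj1 (IH _ _)) ?(proj2 (IH _ _)) //.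
Qed.

Lemma abs_neg n (x : CD n) : cd_abs (cd_neg x) = cd_abs x.
Proof. elim: n x => [|n IH] //= [x b] /=; by rewrite IH. Qed.

Lemma abs_conj n (x : CD n) : cd_abs (cd_conj x) = cd_abs x.
Proof. elim: n x => [|n IH] //= [x []] /=; by rewrite ?abs_neg ?IH. Qed.

Lemma xrC n (x y : CD n) : cd_xr x y = cd_xr y x.
Proof. elim: n x y => [|n IH] //= [x a] [y b] /=; by rewrite IH addbC. Qed.

Lemma xrA n (x y z : CD n) : cd_xr x (cd_xr y z) = cd_xr (cd_xr x y) z.
Proof. elim: n x y z => [|n IH] //= [x a] [y b] [z c] /=; by rewrite IH addbA. Qed.

Lemma xr_absr n (x y : CD n) : cd_xr x (cd_abs y) = cd_xr x y.
Proof. elim: n x y => [|n IH] //= [x a] [y b] /=; by rewrite IH. Qed.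

Lemma xr_self n (x : CD n) : cd_xr x x = cd_one n.
Proof. elim: n x => [|n IH] //= [x a] /=; by rewrite IH addbb. Qed.

Lemma xr_one n (x : CD n) : cd_xr (cd_one n) x = cd_abs x.
Proof. elim: n x => [|n IH] //= [x a] /=; by rewrite IH. Qed.

Lemma abs_mul n (x y : CD n) : cd_abs (cd_mul x y) = cd_xr x y.
Proof.
elim: n x y => [|n IH] //= [x a] [y b] /=; case: a; case: b => /=;
  rewrite ?abs_neg IH //.
- by rewrite xrC -xr_absr abs_conj xr_absr.
- by rewrite -xr_absr abs_conj xr_absr.
- by rewrite xrC.
Qed.

Lemma abs_eq n (a b : CD n) : cd_abs b = cd_abs a -> b = a \/ b = cd_neg a.
Proof.
elim: n a b => [|n IH] /=.
  by move=> [] [] _; auto.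
move=> [a x] [b y] /= [] /IH [] -> ->; auto.
Qed.

Definition good n (f : {perm CD n}) : bool :=
  [exists k : CD n, [forall a : CD n,
     (cd_abs (f a) == cd_xr k a) && (f (cd_neg a) == cd_neg (f a))]].

Lemma good_group n : group_set [set f : {perm CD n} | good f].
Proof.
apply/andP; split.
  rewrite inE; apply/existsP; exists (cd_one n); apply/forallP => a.
  by rewrite !perm1 xr_one !eqxx.
apply/subsetP => h /mulsgP [f g]; rewrite !inE => /existsP [kf /forallP Hf]
  /existsP [kg /forallP Hg] ->.
apply/existsP; exists (cd_xr kg kf); apply/forallP => a.
rewrite !permM.
have /andP [/eqP Af /eqP Nf] := Hf a.
have /andP [/eqP Ag /eqP Ng] := Hg (f a).
have /andP [_ /eqP Ng'] := Hg a.
rewrite Ag -xr_absr Af xrA eqxx /= Nf.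
by have /andP [_ /eqP ->] := Hg (f a).
Qed.

Lemma Mlt_good n (f : {perm CD n}) : f \in Mlt n -> good f.
Proof.
have sub : Mlt n \subset Group (good_group n).
  rewrite /Mlt gen_subG; apply/subsetP => p; rewrite !inE.
  move=> /existsP [x /orP [] /forallP H]; apply/existsP; exists x;
    apply/forallP => a; move: (H a) (H (cd_neg a)) => /eqP -> /eqP ->.
  - by rewrite abs_mul (proj1 (mul_neg _ _)) !eqxx.
  - by rewrite abs_mul xrC (proj2 (mul_neg _ _)) !eqxx.
by move=> /(subsetP sub); rewrite inE.
Qed.

Lemma good_pow4 n (f : {perm CD n}) : good f -> (f ^+ 4 = 1)%g.
Proof.
move=> /existsP [k /forallP H].
have sq : forall a, f (f a) = a \/ f (f a) = cd_neg a.
  move=> a; apply: abs_eq.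
  have /andP [/eqP A1 _] := H (f a).
  have /andP [/eqP A2 _] := H a.
  by rewrite A1 -xr_absr A2 xrA xr_self xr_one.
apply/permP => a; rewrite permX perm1.
have -> : iter 4 f a = f (f (f (f a))) by [].
case: (sq a) => E; rewrite E; first by rewrite E.
have /andP [_ /eqP ->] := H a.
have /andP [_ /eqP ->] := H (f a).
by rewrite E neg_neg.
Qed.

Theorem mainTheorem6 (n : nat) (f : {perm CD n}) :
  f \in Mlt n ->
  (#[f]%g \in [:: 1; 2; 4]) &&
  [forall x : CD n, #|porbit f x| \in [:: 1; 2; 4]].
Proof.
move=> /Mlt_good /good_pow4 H4.
have dv : (#[f]%g %| 4)%N by rewrite order_dvdn H4.
have key : forall d, (0 < d)%N -> (d %| 4)%N -> d \in [:: 1; 2; 4].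
  move=> d d0 dd; have := dvdn_leq (isT : (0 < 4)%N) dd.
  by move: d0 dd; case: d => [|[|[|[|[|]]]]].
apply/andP; split; first by apply: key => //; exact: order_gt0.
apply/forallP => x; apply: key; first by rewrite lt0n card_porbit_neq0.
apply: dvdn_trans dv.
rewrite porbitE -[X in (_ %| X)%N](card_orbit_stab 'P <[f]>%g x) dvdn_mulr //.
Qed.
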